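(* Let $d\in\mathbb{N}$ and, for $(a,b)\in\mathbb{R}^2$, let $H_{(a,b,d)}$ denote the polynomial system $h_1(x,y)=x^{2d}+ay^d-y=0$, $h_2(x,y)=y^{2d}+bx^d-x=0$. Let $E_d\subseteq\mathbb{R}^2$ be the set of all $(a,b)$ such that $H_{(a,b,d)}$ has at least $5$ non-degenerate isolated roots in the open positive quadrant $\mathbb{R}^2_+=\{(x,y): x>0,\ y>0\}$. Then $E_d$ is an open subset of $\mathbb{R}^2$ and is symmetric about the line $\{a=b\}$ (i.e. $(a,b)\in E_d$ if and only if $(b,a)\in E_d$).
   Context: A root $z$ of a polynomial system $F=(f_1,f_2)$ in two variables is non-degenerate if the Jacobian matrix of $F$ at $z$ is invertible. *)

(* Defs.v *)
From Stdlib Require Import Reals List.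
From Coquelicot Require Import Coquelicot.
Open Scope R_scope.

Definition h1 (a b : R) (d : nat) (p : R * R) : R :=
  (fst p) ^ (2 * d) + a * (snd p) ^ d - snd p.
Definition h2 (a b : R) (d : nat) (p : R * R) : R :=
  (snd p) ^ (2 * d) + b * (fst p) ^ d - fst p.

Definition is_root (a b : R) (d : nat) (p : R * R) : Prop :=
  h1 a b d p = 0 /\ h2 a b d p = 0.

Definition partial_x (f : R * R -> R) (p : R * R) : R :=
  Derive (fun x => f (x, snd p)) (fst p).
Definition partial_y (f : R * R -> R) (p : R * R) : R :=
  Derive (fun y => f (fst p, y)) (snd p).

Definition jacobian_det (a b : R) (d : nat) (p : R * R) : R :=
  partial_x (h1 a b d) p * partial_y (h2 a b d) p
  - partial_y (h1 a b d) p * partial_x (h2 a b d) p.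

Definition nondegenerate_root (a b : R) (d : nat) (p : R * R) : Prop :=
  is_root a b d p /\ jacobian_det a b d p <> 0.

Definition isolated_root (a b : R) (d : nat) (p : R * R) : Prop :=
  is_root a b d p /\ locally p (fun q => q = p \/ ~ is_root a b d q).

Definition in_positive_quadrant (p : R * R) : Prop := 0 < fst p /\ 0 < snd p.

Definition E (d : nat) : R * R -> Prop :=
  fun ab => exists l : list (R * R),
    NoDup l /\ (5 <= length l)%nat /\
    List.Forall (fun p => in_positive_quadrant p /\
                     nondegenerate_root (fst ab) (snd ab) d p /\
                     isolated_root (fst ab) (snd ab) d p) l.

(* Main.v *)
Require Import Defs.
From Stdlib Require Import Reals List Lra Lia.
From Coquelicot Require Import Coquelicot.
Open Scope R_scope.

Definition Af (d : nat) (x : R) := INR (2*d) * x ^ (pred (2*d)).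
Definition Bf (d : nat) (a y : R) := a * (INR d * y ^ (pred d)) - 1.

Lemma px_h1 a b d x y : partial_x (h1 a b d) (x,y) = Af d x.
Proof. unfold partial_x, h1, Af; simpl. apply is_derive_unique. auto_derive; auto. ring. Qed.
Lemma py_h1 a b d x y : partial_y (h1 a b d) (x,y) = Bf d a y.
Proof. unfold partial_y, h1, Bf; simpl. apply is_derive_unique. auto_derive; auto. ring. Qed.
Lemma px_h2 a b d x y : partial_x (h2 a b d) (x,y) = Bf d b x.
Proof. unfold partial_x, h2, Bf; simpl. apply is_derive_unique. auto_derive; auto. ring. Qed.
Lemma py_h2 a b d x y : partial_y (h2 a b d) (x,y) = Af d y.
Proof. unfold partial_y, h2, Af; simpl. apply is_derive_unique. auto_derive; auto. ring. Qed.

Lemma jac_formula a b d x y :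
  jacobian_det a b d (x,y) = Af d x * Af d y - Bf d a y * Bf d b x.
Proof. unfold jacobian_det. rewrite px_h1, py_h1, px_h2, py_h2. ring. Qed.

Definition swap (p : R*R) : R*R := (snd p, fst p).

Lemma good_swap a b d p :
  in_positive_quadrant p /\ nondegenerate_root a b d p /\ isolated_root a b d p ->
  in_positive_quadrant (swap p) /\ nondegenerate_root b a d (swap p) /\ isolated_root b a d (swap p).
Proof.
  destruct p as [x y]. unfold in_positive_quadrant, nondegenerate_root, isolated_root, is_root, swap; simpl.
  intros [[Hx Hy] [[[R1 R2] J] [_ L]]].
  split; [lra|]. split; [split; [split; [exact R2|exact R1]|]|].
  - rewrite jac_formula. rewrite jac_formula in J. intro H; apply J. lra.
  - split; [split; [exact R2|exact R1]|].
    destruct L as [e He]. exists e. intros [u v] [B1 B2].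
    destruct (He (v,u) (conj B2 B1)) as [E1|E1].
    + left. injection E1; intros; subst; reflexivity.
    + right. intros [S1 S2]. apply E1. split; [exact S2|exact S1].
Qed.

Lemma E_swap d a b : E d (a,b) -> E d (b,a).
Proof.
  intros [l [ND [Len F]]]. exists (map swap l). split; [|split].
  - apply NoDup_map_NoDup_ForallPairs; auto.
    intros [x y] [u v] _ _ H. unfold swap in H; simpl in H. injection H; intros; subst; auto.
  - rewrite length_map; auto.
  - apply Forall_map. eapply Forall_impl; [|exact F]. intros p Hp. apply good_swap. exact Hp.
Qed.
Lemma pow_mvt n u v : exists w, (u <= w <= v \/ v <= w <= u) /\
  u ^ n - v ^ n = INR n * w ^ (pred n) * (u - v).
Proof.
  destruct (Rtotal_order u v) as [H|[H|H]].
  - destruct (MVT_cor2 (fun y => y ^ n) (fun y => INR n * y ^ pred n) u v H) as [c [Hc1 Hc2]].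
    { intros; apply derivable_pt_lim_pow. }
    exists c. split; [lra|]. simpl in Hc1. lra.
  - subst. exists v. split; [lra|]. ring.
  - destruct (MVT_cor2 (fun y => y ^ n) (fun y => INR n * y ^ pred n) v u H) as [c [Hc1 Hc2]].
    { intros; apply derivable_pt_lim_pow. }
    exists c. split; [lra|]. simpl in Hc1. lra.
Qed.

Lemma abs_le_iff x r : Rabs x <= r <-> - r <= x <= r.
Proof. unfold Rabs; destruct (Rcase_abs x); split; intros; lra. Qed.
Lemma abs_lt_iff x r : Rabs x < r <-> - r < x < r.
Proof. unfold Rabs; destruct (Rcase_abs x); split; intros; lra. Qed.

Lemma between_bound u v w c r : (u <= w <= v \/ v <= w <= u) ->
  Rabs (u - c) <= r -> Rabs (v - c) <= r -> Rabs (w - c) <= r.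
Proof. rewrite !abs_le_iff. lra. Qed.

Lemma pow_bound t y0 m : Rabs (t - y0) <= 1 -> Rabs (t ^ m) <= (Rabs y0 + 1) ^ m.
Proof.
  intro H. rewrite <- RPow_abs. apply pow_incr. split; [apply Rabs_pos|].
  rewrite abs_le_iff in H. unfold Rabs at 1 2; destruct (Rcase_abs t); destruct (Rcase_abs y0); lra.
Qed.

Lemma cont_lemma c a0 y0 m eps : 0 < eps -> exists delta, 0 < delta /\
  forall a t, Rabs (a - a0) < delta -> Rabs (t - y0) < delta ->
  Rabs (c * (a * t ^ m) - c * (a0 * y0 ^ m)) < eps.
Proof.
  intro He.
  set (M := (Rabs y0 + 1) ^ m).
  set (Lt := INR m * (Rabs y0 + 1) ^ pred m).
  assert (HM : 0 <= M) by (unfold M; apply pow_le; pose proof (Rabs_pos y0); lra).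
  assert (HL : 0 <= Lt) by (unfold Lt; apply Rmult_le_pos; [apply pos_INR| apply pow_le; pose proof (Rabs_pos y0); lra]).
  set (Q := Rabs c * (M + Rabs a0 * Lt)).
  assert (HQ : 0 <= Q) by (unfold Q; apply Rmult_le_pos; [apply Rabs_pos|]; pose proof (Rabs_pos a0); nra).
  exists (Rmin 1 (eps / (Q + 1))). split.
  { apply Rmin_glb_lt; [lra|]. apply Rdiv_lt_0_compat; lra. }
  intros a t Ha Ht.
  assert (Hd1 : Rmin 1 (eps / (Q + 1)) <= 1) by apply Rmin_l.
  assert (Hd2 : Rmin 1 (eps / (Q + 1)) <= eps / (Q+1)) by apply Rmin_r.
  set (dl := Rmin 1 (eps / (Q + 1))) in *.
  assert (Htm : Rabs (t ^ m) <= M) by (apply pow_bound with (y0 := y0); lra).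
  destruct (pow_mvt m t y0) as [w [Hw Ew]].
  assert (Hw1 : Rabs (w - y0) <= 1).
  { apply between_bound with t y0; auto; try lra. rewrite Rminus_diag, Rabs_R0; lra. }
  assert (Hwm : Rabs (w ^ pred m) <= (Rabs y0 + 1) ^ pred m) by (apply pow_bound; auto).
  assert (Hdiff : Rabs (t ^ m - y0 ^ m) <= Lt * Rabs (t - y0)).
  { rewrite Ew, !Rabs_mult. unfold Lt. rewrite Rabs_pos_eq by apply pos_INR.
    apply Rmult_le_compat_r; [apply Rabs_pos|]. apply Rmult_le_compat_l; [apply pos_INR|auto]. }
  replace (c * (a * t ^ m) - c * (a0 * y0 ^ m)) with (c * ((a - a0) * t ^ m + a0 * (t ^ m - y0 ^ m))) by ring.
  rewrite Rabs_mult.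
  assert (H1 : Rabs ((a - a0) * t ^ m + a0 * (t ^ m - y0 ^ m)) <= (M + Rabs a0 * Lt) * dl).
  { eapply Rle_trans; [apply Rabs_triang|]. rewrite !Rabs_mult.
    pose proof (Rabs_pos (a - a0)). pose proof (Rabs_pos (t - y0)). pose proof (Rabs_pos a0).
    pose proof (Rabs_pos (t^m)).
    assert (Rabs (a - a0) * Rabs (t ^ m) <= dl * M) by (apply Rmult_le_compat; lra).
    assert (Rabs a0 * Rabs (t ^ m - y0 ^ m) <= Rabs a0 * (Lt * dl)).
    { apply Rmult_le_compat_l; auto. eapply Rle_trans; [exact Hdiff|]. apply Rmult_le_compat_l; lra. }
    nra. }
  assert (H2 : Rabs c * Rabs ((a - a0) * t ^ m + a0 * (t ^ m - y0 ^ m)) <= Q * dl).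
  { unfold Q. rewrite Rmult_assoc. apply Rmult_le_compat_l; [apply Rabs_pos|auto]. }
  assert (H3 : Q * dl <= Q * (eps / (Q + 1))) by (apply Rmult_le_compat_l; auto).
  assert (H4 : Q * (eps / (Q + 1)) < eps).
  { unfold Rdiv. replace (Q * (eps * / (Q + 1))) with (eps * (Q / (Q+1))) by (field; lra).
    assert (Q / (Q+1) < 1). { apply (Rmult_lt_reg_r (Q+1)); [lra|]. unfold Rdiv. rewrite Rmult_assoc, Rinv_l by lra. lra. }
    nra. }
  lra.
Qed.
Fixpoint iterT (T : R*R -> R*R) (p : R*R) (n : nat) : R*R :=
  match n with O => p | S k => T (iterT T p k) end.

Definition dist2 (q q' : R*R) := Rmax (Rabs (fst q - fst q')) (Rabs (snd q - snd q')).

Lemma dist2_pos q q' : 0 <= dist2 q q'.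
Proof. unfold dist2. eapply Rle_trans; [apply Rabs_pos|apply Rmax_l]. Qed.
Lemma dist2_l q q' : Rabs (fst q - fst q') <= dist2 q q'.
Proof. apply Rmax_l. Qed.
Lemma dist2_r q q' : Rabs (snd q - snd q') <= dist2 q q'.
Proof. apply Rmax_r. Qed.

Lemma lin2 e f u v eps n : Rabs e <= eps -> Rabs f <= eps -> Rabs u <= n -> Rabs v <= n ->
  Rabs (e * u + f * v) <= 2 * eps * n.
Proof.
  intros. eapply Rle_trans; [apply Rabs_triang|]. rewrite !Rabs_mult.
  pose proof (Rabs_pos e); pose proof (Rabs_pos f); pose proof (Rabs_pos u); pose proof (Rabs_pos v).
  assert (Rabs e * Rabs u <= eps * n) by (apply Rmult_le_compat; lra).
  assert (Rabs f * Rabs v <= eps * n) by (apply Rmult_le_compat; lra). lra.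
Qed.

Lemma comb2 P Q X Y k : Rabs X <= k -> Rabs Y <= k -> Rabs (P * X - Q * Y) <= (Rabs P + Rabs Q) * k.
Proof.
  intros. unfold Rminus. eapply Rle_trans; [apply Rabs_triang|]. rewrite Rabs_Ropp, !Rabs_mult.
  pose proof (Rabs_pos P); pose proof (Rabs_pos Q).
  assert (Rabs P * Rabs X <= Rabs P * k) by (apply Rmult_le_compat_l; lra).
  assert (Rabs Q * Rabs Y <= Rabs Q * k) by (apply Rmult_le_compat_l; lra). lra.
Qed.

Lemma div_bound N D k : D <> 0 -> Rabs N <= k * Rabs D -> Rabs (N / D) <= k.
Proof.
  intros HD H. unfold Rdiv. rewrite Rabs_mult, Rabs_inv.
  assert (0 < Rabs D) by (apply Rabs_pos_lt; auto).
  apply (Rmult_le_reg_r (Rabs D)); auto. rewrite Rmult_assoc, Rinv_l by lra. lra.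
Qed.

Lemma fixed_point (g1 g2 : R -> R -> R) x0 y0 A0 B0 C0 D0 eps r :
  A0 * D0 - B0 * C0 <> 0 -> 0 < r -> 0 <= eps ->
  4 * (Rabs A0 + Rabs B0 + Rabs C0 + Rabs D0) * eps <= Rabs (A0 * D0 - B0 * C0) ->
  (forall x y x' y', Rabs (x - x0) <= r -> Rabs (y - y0) <= r ->
     Rabs (x' - x0) <= r -> Rabs (y' - y0) <= r ->
     exists e11 e12 e21 e22, Rabs e11 <= eps /\ Rabs e12 <= eps /\ Rabs e21 <= eps /\ Rabs e22 <= eps /\
       g1 x y - g1 x' y' = (A0 + e11) * (x - x') + (B0 + e12) * (y - y') /\
       g2 x y - g2 x' y' = (C0 + e21) * (x - x') + (D0 + e22) * (y - y')) ->
  Rabs ((D0 * g1 x0 y0 - B0 * g2 x0 y0) / (A0 * D0 - B0 * C0)) <= r / 4 ->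
  Rabs ((A0 * g2 x0 y0 - C0 * g1 x0 y0) / (A0 * D0 - B0 * C0)) <= r / 4 ->
  exists x y, Rabs (x - x0) <= r / 2 /\ Rabs (y - y0) <= r / 2 /\ g1 x y = 0 /\ g2 x y = 0 /\
    forall x' y', Rabs (x' - x0) <= r -> Rabs (y' - y0) <= r -> g1 x' y' = 0 -> g2 x' y' = 0 ->
      x' = x /\ y' = y.
Proof.
  intros HD Hr He HK Hmix Hp1 Hp2.
  set (Dl := A0 * D0 - B0 * C0) in *.
  set (T := fun q : R*R => (fst q - (D0 * g1 (fst q) (snd q) - B0 * g2 (fst q) (snd q)) / Dl,
                            snd q - (A0 * g2 (fst q) (snd q) - C0 * g1 (fst q) (snd q)) / Dl)).
  set (inb := fun (q : R*R) => Rabs (fst q - x0) <= r /\ Rabs (snd q - y0) <= r).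
  assert (Hcon : forall q q', inb q -> inb q' ->
     Rabs (fst (T q) - fst (T q')) <= dist2 q q' / 2 /\ Rabs (snd (T q) - snd (T q')) <= dist2 q q' / 2).
  { intros [x y] [x' y'] [H1 H2] [H3 H4]. simpl in *.
    destruct (Hmix x y x' y' H1 H2 H3 H4) as [e11 [e12 [e21 [e22 [E11 [E12 [E21 [E22 [G1 G2]]]]]]]]].
    set (n := dist2 (x,y) (x',y')).
    assert (Hx : Rabs (x - x') <= n) by apply (dist2_l (x,y) (x',y')).
    assert (Hy : Rabs (y - y') <= n) by apply (dist2_r (x,y) (x',y')).
    assert (Hn : 0 <= n) by apply dist2_pos.
    assert (X1 := lin2 e11 e12 _ _ eps n E11 E12 Hx Hy).
    assert (X2 := lin2 e21 e22 _ _ eps n E21 E22 Hx Hy).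
    assert (HK' : (Rabs A0 + Rabs B0 + Rabs C0 + Rabs D0) * (2 * eps * n) <= n / 2 * Rabs Dl).
    { apply Rmult_le_compat_r with (r := n / 2) in HK; [|lra]. 
      replace ((Rabs A0 + Rabs B0 + Rabs C0 + Rabs D0) * (2 * eps * n)) with (4 * (Rabs A0 + Rabs B0 + Rabs C0 + Rabs D0) * eps * (n / 2)) by field.
      rewrite (Rmult_comm (n / 2) (Rabs Dl)). exact HK. }
    split.
    - replace (x - (D0 * g1 x y - B0 * g2 x y) / Dl - (x' - (D0 * g1 x' y' - B0 * g2 x' y') / Dl))
        with ((-(D0 * (e11 * (x - x') + e12 * (y - y')) - B0 * (e21 * (x - x') + e22 * (y - y')))) / Dl).
      2:{ unfold Dl in *. field_simplify_eq; auto.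
          replace (g1 x y) with (g1 x' y' + (A0 + e11) * (x - x') + (B0 + e12) * (y - y')) by lra.
          replace (g2 x y) with (g2 x' y' + (C0 + e21) * (x - x') + (D0 + e22) * (y - y')) by lra. ring. }
      apply div_bound; auto. rewrite Rabs_Ropp.
      eapply Rle_trans; [apply comb2; eauto|].
      pose proof (Rabs_pos A0); pose proof (Rabs_pos B0); pose proof (Rabs_pos C0); pose proof (Rabs_pos D0).
      assert (0 <= 2 * eps * n) by (apply Rmult_le_pos; lra).
      eapply Rle_trans; [|exact HK']. apply Rmult_le_compat_r; lra.
    - replace (y - (A0 * g2 x y - C0 * g1 x y) / Dl - (y' - (A0 * g2 x' y' - C0 * g1 x' y') / Dl))
        with ((-(A0 * (e21 * (x - x') + e22 * (y - y')) - C0 * (e11 * (x - x') + e12 * (y - y')))) / Dl).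
      2:{ unfold Dl in *. field_simplify_eq; auto.
          replace (g1 x y) with (g1 x' y' + (A0 + e11) * (x - x') + (B0 + e12) * (y - y')) by lra.
          replace (g2 x y) with (g2 x' y' + (C0 + e21) * (x - x') + (D0 + e22) * (y - y')) by lra. ring. }
      apply div_bound; auto. rewrite Rabs_Ropp.
      eapply Rle_trans; [apply comb2; eauto|].
      pose proof (Rabs_pos A0); pose proof (Rabs_pos B0); pose proof (Rabs_pos C0); pose proof (Rabs_pos D0).
      assert (0 <= 2 * eps * n) by (apply Rmult_le_pos; lra).
      eapply Rle_trans; [|exact HK']. apply Rmult_le_compat_r; lra. }
  set (p := (x0, y0)).
  assert (Hpin : inb p) by (unfold inb, p; simpl; rewrite !Rminus_diag, Rabs_R0; lra).
  assert (HTp1 : Rabs (fst (T p) - x0) <= r / 4).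
  { unfold T, p; simpl. replace (x0 - _ - x0) with (- ((D0 * g1 x0 y0 - B0 * g2 x0 y0) / Dl)) by ring.
    rewrite Rabs_Ropp; auto. }
  assert (HTp2 : Rabs (snd (T p) - y0) <= r / 4).
  { unfold T, p; simpl. replace (y0 - _ - y0) with (- ((A0 * g2 x0 y0 - C0 * g1 x0 y0) / Dl)) by ring.
    rewrite Rabs_Ropp; auto. }
  assert (Hhalf : forall q, Rabs (fst q - x0) <= r / 2 -> Rabs (snd q - y0) <= r / 2 ->
            Rabs (fst (T q) - x0) <= r / 2 /\ Rabs (snd (T q) - y0) <= r / 2).
  { intros q Hq1 Hq2.
    assert (Hq : inb q) by (unfold inb; lra).
    destruct (Hcon q p Hq Hpin) as [C1 C2].
    assert (dist2 q p <= r / 2) by (unfold dist2, p; simpl; apply Rmax_lub; auto).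
    split.
    - replace (fst (T q) - x0) with ((fst (T q) - fst (T p)) + (fst (T p) - x0)) by ring.
      eapply Rle_trans; [apply Rabs_triang|]. lra.
    - replace (snd (T q) - y0) with ((snd (T q) - snd (T p)) + (snd (T p) - y0)) by ring.
      eapply Rle_trans; [apply Rabs_triang|]. lra. }
  set (it := iterT T p).
  assert (Hit : forall n, Rabs (fst (it n) - x0) <= r / 2 /\ Rabs (snd (it n) - y0) <= r / 2).
  { induction n as [|n IH].
    - unfold it, p; simpl. rewrite !Rminus_diag, Rabs_R0; lra.
    - destruct IH. apply Hhalf; auto. }
  assert (Hitb : forall n, inb (it n)) by (intro n; destruct (Hit n); unfold inb; lra).
  assert (Hstep : forall n, dist2 (it (S n)) (it n) <= r * (/2) ^ n).
  { induction n as [|n IH].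
    - change (dist2 (T p) p <= r * 1). unfold dist2. change (fst p) with x0; change (snd p) with y0.
      apply Rmax_lub; lra.
    - destruct (Hcon (it (S n)) (it n) (Hitb _) (Hitb _)) as [C1 C2].
      change (T (it (S n))) with (it (S (S n))) in C1, C2.
      change (T (it n)) with (it (S n)) in C1, C2.
      replace (r * (/2) ^ (S n)) with (r * (/2) ^ n / 2) by (simpl; field).
      unfold dist2 at 1. apply Rmax_lub; lra. }
  assert (Hcau : forall n k, Rabs (fst (it (n + k)%nat) - fst (it n)) <= 2 * r * (/2) ^ n - 2 * r * (/2) ^ (n + k)
                         /\ Rabs (snd (it (n + k)%nat) - snd (it n)) <= 2 * r * (/2) ^ n - 2 * r * (/2) ^ (n + k)).
  { intros n k. induction k as [|k IH].
    - rewrite Nat.add_0_r, !Rminus_diag, Rabs_R0. lra.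
    - rewrite Nat.add_succ_r. pose proof (Hstep (n + k)%nat) as S1.
      pose proof (dist2_l (it (S (n + k)%nat)) (it (n + k)%nat)).
      pose proof (dist2_r (it (S (n + k)%nat)) (it (n + k)%nat)).
      destruct IH as [I1 I2].
      replace (2 * r * (/ 2) ^ n - 2 * r * (/ 2) ^ (S (n + k))) with
        (r * (/2) ^ (n + k)%nat + (2 * r * (/ 2) ^ n - 2 * r * (/ 2) ^ (n + k)%nat)) by (simpl; field).
      split.
      + replace (fst (it (S (n + k)%nat)) - fst (it n)) with
          ((fst (it (S (n + k)%nat)) - fst (it (n + k)%nat)) + (fst (it (n + k)%nat) - fst (it n))) by ring.
        eapply Rle_trans; [apply Rabs_triang|]. lra.
      + replace (snd (it (S (n + k)%nat)) - snd (it n)) with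
          ((snd (it (S (n + k)%nat)) - snd (it (n + k)%nat)) + (snd (it (n + k)%nat) - snd (it n))) by ring.
        eapply Rle_trans; [apply Rabs_triang|]. lra. }
  assert (Hsmall : forall e, 0 < e -> exists N, forall n, (n >= N)%nat -> 2 * r * (/2) ^ n < e).
  { intros e0 He0. destruct (pow_lt_1_zero (/2)) with (y := e0 / (2 * r)) as [N HN].
    { rewrite Rabs_pos_eq; lra. } { apply Rdiv_lt_0_compat; lra. }
    exists N. intros n Hn. specialize (HN n Hn). rewrite Rabs_pos_eq in HN by (apply pow_le; lra).
    apply (Rmult_lt_compat_l (2 * r)) in HN; [|lra].
    replace (2 * r * (e0 / (2 * r))) with e0 in HN by (field; lra). lra. }
  assert (Hpos2 : forall n, 0 <= 2 * r * (/2) ^ n) by (intro; apply Rmult_le_pos; [lra|apply pow_le; lra]).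
  assert (Hcc : forall (f : R*R -> R), (forall n k, Rabs (f (it (n + k)%nat) - f (it n)) <= 2 * r * (/2) ^ n - 2 * r * (/2) ^ (n + k)) ->
            Cauchy_crit (fun n => f (it n))).
  { intros f Hf e0 He0. destruct (Hsmall e0 He0) as [N HN]. exists N. intros n m Hn Hm.
    unfold R_dist. destruct (Nat.le_ge_cases n m) as [Hnm|Hnm].
    - replace m with (n + (m - n))%nat by lia. rewrite <- Rabs_Ropp, Ropp_minus_distr.
      specialize (Hf n (m - n)%nat). specialize (HN n Hn). specialize (Hpos2 (n + (m - n))%nat). lra.
    - replace n with (m + (n - m))%nat by lia.
      specialize (Hf m (n - m)%nat). specialize (HN m Hm). specialize (Hpos2 (m + (n - m))%nat). lra. }
  destruct (Rcomplete.R_complete _ (Hcc fst (fun n k => proj1 (Hcau n k)))) as [xs Hxs].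
  destruct (Rcomplete.R_complete _ (Hcc snd (fun n k => proj2 (Hcau n k)))) as [ys Hys].
  set (qs := (xs, ys)).
  assert (Happ : forall e, 0 < e -> exists N, forall n, (n >= N)%nat ->
            Rabs (fst (it n) - xs) < e /\ Rabs (snd (it n) - ys) < e).
  { intros e0 He0. destruct (Hxs e0 He0) as [N1 HN1]. destruct (Hys e0 He0) as [N2 HN2].
    exists (max N1 N2). intros n Hn. split; [apply HN1|apply HN2]; lia. }
  assert (Hqs1 : Rabs (xs - x0) <= r / 2 /\ Rabs (ys - y0) <= r / 2).
  { split; apply le_epsilon; intros e0 He0; destruct (Happ e0 He0) as [N HN]; destruct (HN N (le_n _)) as [N1 N2];
    destruct (Hit N) as [I1 I2].
    - replace (xs - x0) with ((xs - fst (it N)) + (fst (it N) - x0)) by ring.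
      eapply Rle_trans; [apply Rabs_triang|]. rewrite <- Rabs_Ropp, Ropp_minus_distr. lra.
    - replace (ys - y0) with ((ys - snd (it N)) + (snd (it N) - y0)) by ring.
      eapply Rle_trans; [apply Rabs_triang|]. rewrite <- Rabs_Ropp, Ropp_minus_distr. lra. }
  assert (Hqsin : inb qs) by (unfold inb, qs; simpl; lra).
  assert (Hfix : fst (T qs) = xs /\ snd (T qs) = ys).
  { assert (Hz : forall z, (forall e, 0 < e -> Rabs z <= e) -> z = 0).
    { intros z Hz. destruct (Req_dec z 0) as [|Hne]; auto. exfalso.
      assert (Hzp : 0 < Rabs z) by (apply Rabs_pos_lt; auto). specialize (Hz (Rabs z / 2)). lra. }
    assert (forall e, 0 < e -> Rabs (fst (T qs) - xs) <= e /\ Rabs (snd (T qs) - ys) <= e).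
    { intros e0 He0. destruct (Happ (e0 / 2) ltac:(lra)) as [N HN].
      destruct (HN N (le_n _)) as [N1 N2]. destruct (HN (S N) ltac:(lia)) as [N3 N4].
      destruct (Hcon qs (it N) Hqsin (Hitb N)) as [C1 C2].
      assert (dist2 qs (it N) <= e0 / 2).
      { unfold dist2, qs; simpl. apply Rmax_lub; rewrite <- Rabs_Ropp, Ropp_minus_distr; lra. }
      change (T (it N)) with (it (S N)) in C1, C2.
      split.
      - replace (fst (T qs) - xs) with ((fst (T qs) - fst (it (S N))) + (fst (it (S N)) - xs)) by ring.
        eapply Rle_trans; [apply Rabs_triang|]. lra.
      - replace (snd (T qs) - ys) with ((snd (T qs) - snd (it (S N))) + (snd (it (S N)) - ys)) by ring.
        eapply Rle_trans; [apply Rabs_triang|]. lra. }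
    split; apply Rminus_diag_uniq, Hz; intros e0 He0; apply H; auto. }
  assert (Hroot : forall q, inb q -> T q = q -> g1 (fst q) (snd q) = 0 /\ g2 (fst q) (snd q) = 0).
  { intros [x y] _ Heq. unfold T in Heq; simpl in *. injection Heq; intros E2 E1.
    assert (F1 : (D0 * g1 x y - B0 * g2 x y) / Dl = 0) by lra.
    assert (F2 : (A0 * g2 x y - C0 * g1 x y) / Dl = 0) by lra.
    assert (G1 : D0 * g1 x y - B0 * g2 x y = 0).
    { apply (f_equal (fun z => z * Dl)) in F1. unfold Rdiv in F1. rewrite Rmult_assoc, Rinv_l in F1 by auto. lra. }
    assert (G2 : A0 * g2 x y - C0 * g1 x y = 0).
    { apply (f_equal (fun z => z * Dl)) in F2. unfold Rdiv in F2. rewrite Rmult_assoc, Rinv_l in F2 by auto. lra. }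
    split.
    - apply (Rmult_eq_reg_l Dl); auto. unfold Dl. rewrite Rmult_0_r.
      replace ((A0 * D0 - B0 * C0) * g1 x y) with (A0 * (D0 * g1 x y - B0 * g2 x y) + B0 * (A0 * g2 x y - C0 * g1 x y)) by ring.
      rewrite G1, G2; ring.
    - apply (Rmult_eq_reg_l Dl); auto. unfold Dl. rewrite Rmult_0_r.
      replace ((A0 * D0 - B0 * C0) * g2 x y) with (C0 * (D0 * g1 x y - B0 * g2 x y) + D0 * (A0 * g2 x y - C0 * g1 x y)) by ring.
      rewrite G1, G2; ring. }
  assert (HTq : T qs = qs) by (apply injective_projections; [exact (proj1 Hfix) | exact (proj2 Hfix)]).
  destruct (Hroot qs Hqsin HTq) as [R1 R2].
  exists xs, ys. split; [tauto|]. split; [tauto|]. split; [exact R1|]. split; [exact R2|].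
  intros x' y' Hx' Hy' Z1 Z2.
  assert (Hin' : inb (x', y')) by (unfold inb; simpl; lra).
  assert (HT' : T (x', y') = (x', y')).
  { unfold T; simpl. rewrite Z1, Z2. f_equal; unfold Rdiv; ring. }
  destruct (Hcon (x', y') qs Hin' Hqsin) as [C1 C2]. rewrite HT', HTq in C1, C2.
  pose proof (dist2_pos (x', y') qs).
  assert (dist2 (x', y') qs <= dist2 (x', y') qs / 2).
  { unfold dist2 at 1. apply Rmax_lub; auto. }
  assert (Hd0 : dist2 (x', y') qs = 0) by lra.
  pose proof (dist2_l (x', y') qs). pose proof (dist2_r (x', y') qs).
  rewrite Hd0 in *. unfold qs in *; simpl in *.
  pose proof (Rabs_pos (x' - xs)). pose proof (Rabs_pos (y' - ys)).
  split; apply Rminus_diag_uniq; apply Rabs_eq_0; lra.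
Qed.

Lemma prod_bound p q P Q : Rabs p <= P -> Rabs q <= Q -> Rabs (p * q) <= P * Q.
Proof. intros. rewrite Rabs_mult. apply Rmult_le_compat; auto; apply Rabs_pos. Qed.

Lemma det_pert A0 B0 C0 D0 e1 e2 e3 e4 eps :
  Rabs e1 <= eps -> Rabs e2 <= eps -> Rabs e3 <= eps -> Rabs e4 <= eps -> eps <= 1 ->
  (Rabs A0 + Rabs B0 + Rabs C0 + Rabs D0 + 2) * eps < Rabs (A0 * D0 - B0 * C0) ->
  (A0 + e1) * (D0 + e4) - (B0 + e2) * (C0 + e3) <> 0.
Proof.
  intros H1 H2 H3 H4 He HK Hz.
  assert (Hr : Rabs (A0 * e4 + e1 * D0 + e1 * e4 + - (B0 * e3) + - (e2 * C0) + - (e2 * e3)) <=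
     (Rabs A0 + Rabs B0 + Rabs C0 + Rabs D0 + 2) * eps).
  { pose proof (Rabs_pos e1). pose proof (Rabs_pos A0).
    assert (P1 := prod_bound A0 e4 _ _ (Rle_refl _) H4).
    assert (P2 := prod_bound e1 D0 _ _ H1 (Rle_refl _)).
    assert (P3 := prod_bound e1 e4 _ _ H1 H4).
    assert (P4 := prod_bound B0 e3 _ _ (Rle_refl _) H3).
    assert (P5 := prod_bound e2 C0 _ _ H2 (Rle_refl _)).
    assert (P6 := prod_bound e2 e3 _ _ H2 H3).
    assert (eps * eps <= eps) by nra.
    pose proof (Rabs_triang (A0 * e4) (e1 * D0)).
    pose proof (Rabs_triang (A0 * e4 + e1 * D0) (e1 * e4)).
    pose proof (Rabs_triang (A0 * e4 + e1 * D0 + e1 * e4) (- (B0 * e3))).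
    pose proof (Rabs_triang (A0 * e4 + e1 * D0 + e1 * e4 + - (B0 * e3)) (- (e2 * C0))).
    pose proof (Rabs_triang (A0 * e4 + e1 * D0 + e1 * e4 + - (B0 * e3) + - (e2 * C0)) (- (e2 * e3))).
    rewrite !Rabs_Ropp in *. lra. }
  replace (A0 * e4 + e1 * D0 + e1 * e4 + - (B0 * e3) + - (e2 * C0) + - (e2 * e3))
    with (- (A0 * D0 - B0 * C0)) in Hr by lra.
  rewrite Rabs_Ropp in Hr. lra.
Qed.

Lemma perturb d a0 b0 x0 y0 : 0 < x0 -> 0 < y0 -> is_root a0 b0 d (x0, y0) ->
  jacobian_det a0 b0 d (x0, y0) <> 0 ->
  forall rho, 0 < rho -> exists delta, 0 < delta /\ forall a b, Rabs (a - a0) < delta -> Rabs (b - b0) < delta ->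
  exists q, dist2 q (x0, y0) < rho /\ in_positive_quadrant q /\ nondegenerate_root a b d q /\ isolated_root a b d q.
Proof.
  intros Hx0 Hy0 [Rt1 Rt2] HJ rho Hrho.
  rewrite jac_formula in HJ.
  set (A0 := Af d x0) in *. set (B0 := Bf d a0 y0) in *. set (C0 := Bf d b0 x0) in *. set (D0 := Af d y0) in *.
  set (Dl := A0 * D0 - B0 * C0) in *.
  set (Km := Rabs A0 + Rabs B0 + Rabs C0 + Rabs D0).
  assert (HKm : 0 <= Km) by (unfold Km; pose proof (Rabs_pos A0); pose proof (Rabs_pos B0); pose proof (Rabs_pos C0); pose proof (Rabs_pos D0); lra).
  assert (HDl : 0 < Rabs Dl) by (apply Rabs_pos_lt; auto).
  set (eps := Rmin 1 (Rabs Dl / (8 * Km + 8))).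
  assert (Heps : 0 < eps) by (apply Rmin_glb_lt; [lra|apply Rdiv_lt_0_compat; lra]).
  assert (Heps1 : eps <= 1) by apply Rmin_l.
  assert (Heps2 : eps <= Rabs Dl / (8 * Km + 8)) by apply Rmin_r.
  assert (Heps3 : eps * (8 * Km + 8) <= Rabs Dl).
  { apply Rmult_le_compat_r with (r := 8 * Km + 8) in Heps2; [|lra].
    unfold Rdiv in Heps2. rewrite Rmult_assoc, Rinv_l in Heps2 by lra. lra. }
  destruct (cont_lemma (INR (2 * d)) 1 x0 (pred (2 * d)) eps Heps) as [d1 [Hd1 C1]].
  destruct (cont_lemma (INR (2 * d)) 1 y0 (pred (2 * d)) eps Heps) as [d2 [Hd2 C2]].
  destruct (cont_lemma (INR d) a0 y0 (pred d) eps Heps) as [d3 [Hd3 C3]].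
  destruct (cont_lemma (INR d) b0 x0 (pred d) eps Heps) as [d4 [Hd4 C4]].
  set (dc := Rmin (Rmin d1 d2) (Rmin d3 d4)).
  assert (Hdc : 0 < dc) by (unfold dc; repeat apply Rmin_glb_lt; auto).
  assert (Hdc1 : dc <= d1) by (unfold dc; eapply Rle_trans; [apply Rmin_l|apply Rmin_l]).
  assert (Hdc2 : dc <= d2) by (unfold dc; eapply Rle_trans; [apply Rmin_l|apply Rmin_r]).
  assert (Hdc3 : dc <= d3) by (unfold dc; eapply Rle_trans; [apply Rmin_r|apply Rmin_l]).
  assert (Hdc4 : dc <= d4) by (unfold dc; eapply Rle_trans; [apply Rmin_r|apply Rmin_r]).
  assert (CA : forall s, Rabs (s - x0) < dc -> Rabs (Af d s - A0) <= eps).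
  { intros s Hs. left. unfold A0, Af. replace (INR (2 * d) * s ^ pred (2 * d) - INR (2 * d) * x0 ^ pred (2 * d))
      with (INR (2 * d) * (1 * s ^ pred (2 * d)) - INR (2 * d) * (1 * x0 ^ pred (2 * d))) by ring.
    apply C1; [rewrite Rminus_diag, Rabs_R0|]; lra. }
  assert (CD : forall t, Rabs (t - y0) < dc -> Rabs (Af d t - D0) <= eps).
  { intros s Hs. left. unfold D0, Af. replace (INR (2 * d) * s ^ pred (2 * d) - INR (2 * d) * y0 ^ pred (2 * d))
      with (INR (2 * d) * (1 * s ^ pred (2 * d)) - INR (2 * d) * (1 * y0 ^ pred (2 * d))) by ring.
    apply C2; [rewrite Rminus_diag, Rabs_R0|]; lra. }
  assert (CB : forall a t, Rabs (a - a0) < dc -> Rabs (t - y0) < dc -> Rabs (Bf d a t - B0) <= eps).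
  { intros a t Ha Ht. left. unfold B0, Bf.
    replace (a * (INR d * t ^ pred d) - 1 - (a0 * (INR d * y0 ^ pred d) - 1))
      with (INR d * (a * t ^ pred d) - INR d * (a0 * y0 ^ pred d)) by ring.
    apply C3; lra. }
  assert (CC : forall b s, Rabs (b - b0) < dc -> Rabs (s - x0) < dc -> Rabs (Bf d b s - C0) <= eps).
  { intros b s Hb Hs. left. unfold C0, Bf.
    replace (b * (INR d * s ^ pred d) - 1 - (b0 * (INR d * x0 ^ pred d) - 1))
      with (INR d * (b * s ^ pred d) - INR d * (b0 * x0 ^ pred d)) by ring.
    apply C4; lra. }
  set (r := Rmin (Rmin (dc / 2) rho) (Rmin (x0 / 2) (y0 / 2))).
  assert (Hr : 0 < r) by (unfold r; repeat apply Rmin_glb_lt; lra).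
  assert (Hr1 : r <= dc / 2) by (unfold r; eapply Rle_trans; [apply Rmin_l|apply Rmin_l]).
  assert (Hr2 : r <= rho) by (unfold r; eapply Rle_trans; [apply Rmin_l|apply Rmin_r]).
  assert (Hr3 : r <= x0 / 2) by (unfold r; eapply Rle_trans; [apply Rmin_r|apply Rmin_l]).
  assert (Hr4 : r <= y0 / 2) by (unfold r; eapply Rle_trans; [apply Rmin_r|apply Rmin_r]).
  set (M := x0 ^ d + y0 ^ d).
  assert (HM : 0 <= M) by (unfold M; pose proof (pow_le x0 d); pose proof (pow_le y0 d); lra).
  set (dp := r * Rabs Dl / (4 * (Km + 1) * (M + 1))).
  assert (Hdp : 0 < dp) by (unfold dp; apply Rdiv_lt_0_compat; [apply Rmult_lt_0_compat|]; nra).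
  exists (Rmin dc dp). split; [apply Rmin_glb_lt; auto|].
  intros a b Ha Hb.
  assert (Ha1 : Rabs (a - a0) < dc) by (eapply Rlt_le_trans; [exact Ha|apply Rmin_l]).
  assert (Hb1 : Rabs (b - b0) < dc) by (eapply Rlt_le_trans; [exact Hb|apply Rmin_l]).
  assert (Ha2 : Rabs (a - a0) <= dp) by (left; eapply Rlt_le_trans; [exact Ha|apply Rmin_r]).
  assert (Hb2 : Rabs (b - b0) <= dp) by (left; eapply Rlt_le_trans; [exact Hb|apply Rmin_r]).
  set (g1 := fun x y => h1 a b d (x, y)).
  set (g2 := fun x y => h2 a b d (x, y)).
  assert (HK : 4 * Km * eps <= Rabs Dl) by nra.
  assert (Hmix : forall x y x' y', Rabs (x - x0) <= r -> Rabs (y - y0) <= r ->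
     Rabs (x' - x0) <= r -> Rabs (y' - y0) <= r ->
     exists e11 e12 e21 e22, Rabs e11 <= eps /\ Rabs e12 <= eps /\ Rabs e21 <= eps /\ Rabs e22 <= eps /\
       g1 x y - g1 x' y' = (A0 + e11) * (x - x') + (B0 + e12) * (y - y') /\
       g2 x y - g2 x' y' = (C0 + e21) * (x - x') + (D0 + e22) * (y - y')).
  { intros x y x' y' H1 H2 H3 H4.
    destruct (pow_mvt (2 * d) x x') as [w1 [Hw1 E1]].
    destruct (pow_mvt d y y') as [w2 [Hw2 E2]].
    destruct (pow_mvt d x x') as [w3 [Hw3 E3]].
    destruct (pow_mvt (2 * d) y y') as [w4 [Hw4 E4]].
    pose proof (between_bound _ _ _ _ _ Hw1 H1 H3).
    pose proof (between_bound _ _ _ _ _ Hw2 H2 H4).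
    pose proof (between_bound _ _ _ _ _ Hw3 H1 H3).
    pose proof (between_bound _ _ _ _ _ Hw4 H2 H4).
    exists (Af d w1 - A0), (Bf d a w2 - B0), (Bf d b w3 - C0), (Af d w4 - D0).
    split; [apply CA; lra|]. split; [apply CB; lra|]. split; [apply CC; lra|]. split; [apply CD; lra|].
    unfold g1, g2, h1, h2; cbn [fst snd]. split.
    - replace (x ^ (2 * d) + a * y ^ d - y - (x' ^ (2 * d) + a * y' ^ d - y'))
        with ((x ^ (2 * d) - x' ^ (2 * d)) + a * (y ^ d - y' ^ d) - (y - y')) by ring.
      rewrite E1, E2. unfold Af, Bf. ring.
    - replace (y ^ (2 * d) + b * x ^ d - x - (y' ^ (2 * d) + b * x' ^ d - x'))
        with ((y ^ (2 * d) - y' ^ (2 * d)) + b * (x ^ d - x' ^ d) - (x - x')) by ring.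
      rewrite E3, E4. unfold Af, Bf. ring. }
  assert (Hg1 : g1 x0 y0 = (a - a0) * y0 ^ d).
  { unfold g1. unfold h1 in *; simpl in *. lra. }
  assert (Hg2 : g2 x0 y0 = (b - b0) * x0 ^ d).
  { unfold g2. unfold h2 in *; simpl in *. lra. }
  assert (Hy0d : 0 <= y0 ^ d) by (apply pow_le; lra).
  assert (Hx0d : 0 <= x0 ^ d) by (apply pow_le; lra).
  assert (Hgb1 : Rabs (g1 x0 y0) <= dp * M).
  { rewrite Hg1, Rabs_mult, (Rabs_pos_eq (y0 ^ d)) by auto. unfold M.
    apply Rmult_le_compat; auto; [apply Rabs_pos|lra]. }
  assert (Hgb2 : Rabs (g2 x0 y0) <= dp * M).
  { rewrite Hg2, Rabs_mult, (Rabs_pos_eq (x0 ^ d)) by auto. unfold M.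
    apply Rmult_le_compat; auto; [apply Rabs_pos|lra]. }
  assert (HdpM : Km * (dp * M) <= r / 4 * Rabs Dl).
  { assert (Km * (dp * M) <= (Km + 1) * (M + 1) * dp).
    { assert (0 <= dp * M) by nra. nra. }
    assert ((Km + 1) * (M + 1) * dp = r / 4 * Rabs Dl) by (unfold dp; field; nra). lra. }
  assert (Hp1 : Rabs ((D0 * g1 x0 y0 - B0 * g2 x0 y0) / Dl) <= r / 4).
  { apply div_bound; auto. eapply Rle_trans; [apply comb2; eauto|].
    eapply Rle_trans; [|exact HdpM]. apply Rmult_le_compat_r; [nra|]. unfold Km.
    pose proof (Rabs_pos A0); pose proof (Rabs_pos C0). lra. }
  assert (Hp2 : Rabs ((A0 * g2 x0 y0 - C0 * g1 x0 y0) / Dl) <= r / 4).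
  { apply div_bound; auto. eapply Rle_trans; [apply comb2; eauto|].
    eapply Rle_trans; [|exact HdpM]. apply Rmult_le_compat_r; [nra|]. unfold Km.
    pose proof (Rabs_pos B0); pose proof (Rabs_pos D0). lra. }
  destruct (fixed_point g1 g2 x0 y0 A0 B0 C0 D0 eps r HJ Hr (Rlt_le _ _ Heps) HK Hmix Hp1 Hp2)
    as [xs [ys [Hxs [Hys [Z1 [Z2 Huniq]]]]]].
  exists (xs, ys).
  split; [|split; [|split]].
  - unfold dist2; simpl. apply Rmax_lub_lt; lra.
  - unfold in_positive_quadrant; simpl. rewrite abs_le_iff in Hxs, Hys. lra.
  - split; [split; [exact Z1|exact Z2]|].
    rewrite jac_formula.
    replace (Af d xs) with (A0 + (Af d xs - A0)) by ring.
    replace (Af d ys) with (D0 + (Af d ys - D0)) by ring.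
    replace (Bf d a ys) with (B0 + (Bf d a ys - B0)) by ring.
    replace (Bf d b xs) with (C0 + (Bf d b xs - C0)) by ring.
    apply det_pert with eps; auto; try (apply CA || apply CB || apply CC || apply CD); try lra.
    fold Km. fold Dl. nra.
  - split; [split; [exact Z1|exact Z2]|].
    exists (mkposreal (r / 2) ltac:(lra)). intros [u v] [B1 B2].
    change (Rabs (u - xs) < r / 2) in B1. change (Rabs (v - ys) < r / 2) in B2.
    destruct (Req_dec u xs) as [Eu|Eu]; destruct (Req_dec v ys) as [Ev|Ev];
      try (left; subst; reflexivity);
      right; intros [Q1 Q2]; 
      (destruct (Huniq u v) as [U1 U2];
       [ replace (u - x0) with ((u - xs) + (xs - x0)) by ring; eapply Rle_trans; [apply Rabs_triang|]; lra
       | replace (v - y0) with ((v - ys) + (ys - y0)) by ring; eapply Rle_trans; [apply Rabs_triang|]; lra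
       | exact Q1 | exact Q2 | tauto ]).
Qed.

Lemma dist2_sym p q : dist2 p q = dist2 q p.
Proof. unfold dist2. rewrite (Rabs_minus_sym (fst p)), (Rabs_minus_sym (snd p)). reflexivity. Qed.

Lemma dist2_tri p q s : dist2 p s <= dist2 p q + dist2 q s.
Proof.
  unfold dist2 at 1. pose proof (dist2_l p q); pose proof (dist2_r p q);
  pose proof (dist2_l q s); pose proof (dist2_r q s).
  apply Rmax_lub.
  - replace (fst p - fst s) with ((fst p - fst q) + (fst q - fst s)) by ring.
    eapply Rle_trans; [apply Rabs_triang|]; lra.
  - replace (snd p - snd s) with ((snd p - snd q) + (snd q - snd s)) by ring.
    eapply Rle_trans; [apply Rabs_triang|]; lra.
Qed.

Lemma dist2_pos_neq p q : p <> q -> 0 < dist2 p q.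
Proof.
  intro H. destruct (Rle_lt_or_eq_dec 0 (dist2 p q) (dist2_pos p q)) as [|E]; auto.
  exfalso. apply H. pose proof (dist2_l p q); pose proof (dist2_r p q).
  pose proof (Rabs_pos (fst p - fst q)); pose proof (Rabs_pos (snd p - snd q)).
  apply injective_projections; apply Rminus_diag_uniq, Rabs_eq_0; lra.
Qed.

Lemma mindist x (l : list (R*R)) : ~ In x l -> exists s, 0 < s /\ forall p, In p l -> s <= dist2 x p.
Proof.
  induction l as [|y l IH]; intro H.
  - exists 1. split; [lra|]. intros p [].
  - assert (Hy : x <> y) by (intro E; apply H; left; auto).
    destruct IH as [s [Hs Hp]]. { intro; apply H; right; auto. }
    exists (Rmin (dist2 x y) s). split. { apply Rmin_glb_lt; auto. apply dist2_pos_neq; auto. }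
    intros p [E|E]. { subst. apply Rmin_l. } eapply Rle_trans; [apply Rmin_r|auto].
Qed.

Lemma sep (l : list (R*R)) : NoDup l -> exists rho, 0 < rho /\
  forall p p', In p l -> In p' l -> p <> p' -> 2 * rho <= dist2 p p'.
Proof.
  induction l as [|x l IH]; intro ND.
  - exists 1. split; [lra|]. intros p p' [].
  - apply NoDup_cons_iff in ND. destruct ND as [Hx ND].
    destruct (IH ND) as [r1 [Hr1 H1]]. destruct (mindist x l Hx) as [s [Hs Hsp]].
    exists (Rmin r1 (s / 2)). split. { apply Rmin_glb_lt; lra. }
    assert (Rmin r1 (s / 2) <= r1) by apply Rmin_l. assert (Rmin r1 (s / 2) <= s / 2) by apply Rmin_r.
    intros p p' [E|E] [E'|E'] Hne.
    + subst. congruence.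
    + subst. specialize (Hsp p' E'). lra.
    + subst. specialize (Hsp p E). rewrite dist2_sym. lra.
    + specialize (H1 p p' E E' Hne). lra.
Qed.

Definition good (a b : R) (d : nat) (p : R*R) :=
  in_positive_quadrant p /\ nondegenerate_root a b d p /\ isolated_root a b d p.

Lemma lift d a0 b0 rho : 0 < rho -> forall l : list (R*R), List.Forall (good a0 b0 d) l ->
  exists delta, 0 < delta /\ forall a b, Rabs (a - a0) < delta -> Rabs (b - b0) < delta ->
  exists l', Forall2 (fun p q => dist2 q p < rho /\ good a b d q) l l'.
Proof.
  intros Hrho l. induction l as [|[x0 y0] l IH]; intro F.
  - exists 1. split; [lra|]. intros. exists nil. constructor.
  - inversion F as [|? ? Hp Fl]; subst.
    destruct (IH Fl) as [d1 [Hd1 H1]].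
    destruct Hp as [[Hx Hy] [[Hr HJ] _]]. simpl in Hx, Hy.
    destruct (perturb d a0 b0 x0 y0 Hx Hy Hr HJ rho Hrho) as [d2 [Hd2 H2]].
    exists (Rmin d1 d2). split; [apply Rmin_glb_lt; auto|].
    intros a b Ha Hb.
    assert (Rmin d1 d2 <= d1) by apply Rmin_l. assert (Rmin d1 d2 <= d2) by apply Rmin_r.
    destruct (H1 a b ltac:(lra) ltac:(lra)) as [l' Hl'].
    destruct (H2 a b ltac:(lra) ltac:(lra)) as [q [Hq1 Hq2]].
    exists (q :: l'). constructor; [split; [exact Hq1 | exact Hq2] | exact Hl'].
Qed.

Lemma Forall2_in_r {A B} (Rl : A -> B -> Prop) l l' q : Forall2 Rl l l' -> In q l' -> exists p, In p l /\ Rl p q.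
Proof.
  induction 1 as [|p q' l l' H F IH]; intro Hin; [destruct Hin|destruct Hin as [E|E]].
  - subst. exists p. split; [left|]; auto.
  - destruct (IH E) as [p' [H1 H2]]. exists p'. split; [right|]; auto.
Qed.

Lemma Forall2_Forall_r {A B} (Rl : A -> B -> Prop) (P : B -> Prop) (l : list A) (l' : list B) :
  Forall2 Rl l l' -> (forall p q, Rl p q -> P q) -> List.Forall P l'.
Proof. induction 1; constructor; eauto. Qed.

Lemma nodup_lift rho (Pq : R*R -> Prop) l l' : Forall2 (fun p q => dist2 q p < rho /\ Pq q) l l' -> NoDup l ->
  (forall p p', In p l -> In p' l -> p <> p' -> 2 * rho <= dist2 p p') -> NoDup l'.
Proof.
  induction 1 as [|p q l l' Hpq F IH]; intros ND Hsep.
  - constructor.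
  - apply NoDup_cons_iff in ND. destruct ND as [Hp ND]. constructor.
    + intro Hq. destruct (Forall2_in_r _ _ _ _ F Hq) as [p' [Hp' [Hd _]]].
      assert (Hne : p <> p') by (intro E; subst; auto).
      specialize (Hsep p p' (or_introl eq_refl) (or_intror Hp') Hne).
      pose proof (dist2_tri p q p'). rewrite (dist2_sym p q) in H. destruct Hpq. lra.
    + apply IH; auto. intros; apply Hsep; auto; right; auto.
Qed.

Theorem proposition1p4 (d : nat) :
  open (E d) /\ (forall a b : R, E d (a, b) <-> E d (b, a)).
Proof.
  split.
  - intros [a0 b0] [l [ND [Len F]]].
    destruct (sep l ND) as [rho [Hrho Hsep]].
    destruct (lift d a0 b0 rho Hrho l F) as [dl [Hdl H]].
    exists (mkposreal dl Hdl). intros [a b] [B1 B2].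
    change (Rabs (a - a0) < dl) in B1. change (Rabs (b - b0) < dl) in B2.
    destruct (H a b B1 B2) as [l' Hl'].
    exists l'. split; [|split].
    + eapply nodup_lift; eauto.
    + rewrite <- (Forall2_length Hl'). exact Len.
    + eapply Forall2_Forall_r; [exact Hl'|]. intros p q [_ Hq]. exact Hq.
  - intros a b; split; apply E_swap.
Qed.
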